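(* Consider the dimensionless Maxwell's equations in free space, $\partial_t\mathbf{E}=\nabla\times\mathbf{H}$, $\partial_t\mathbf{H}=-\nabla\times\mathbf{E}$, in their one-dimensional form ($\partial_t E=\partial_x H$, $\partial_t H=\partial_x E$), two-dimensional $\mathrm{TM}_z$ form ($\partial_t H_x=-\partial_y E_z$, $\partial_t H_y=\partial_x E_z$, $\partial_t E_z=\partial_x H_y-\partial_y H_x$), or three-dimensional form, on the unit cube with periodic boundary conditions, discretized on a uniform rectangular grid with spacings $\Delta x$ (and $\Delta y$, $\Delta z$) and time step $\Delta t$. The BFECC scheme based on the central difference scheme is second order accurate. It is stable in the $l^2$ sense if (1) in the one-dimensional case, $\Delta t\le\sqrt3\,\Delta x$; or (2) in the two-dimensional case, $\Delta t\le \dfrac{\sqrt3}{\sqrt{(1/\Delta x)^2+(1/\Delta y)^2}}$; or (3) in the three-dimensional case, $\Delta t\le \dfrac{\sqrt3}{\sqrt{(1/\Delta x)^2+(1/\Delta y)^2+(1/\Delta z)^2}}$.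
   Context: Write the system as $\partial_t\mathbf{u}=\sum_{m}A_m\partial_{x_m}\mathbf{u}$ with constant matrices $A_m$. The central difference scheme is $\mathbf{U}^{n+1}_{\mathbf{j}}=\mathbf{U}^n_{\mathbf{j}}+\sum_m\frac{\Delta t}{2\Delta x_m}A_m(\mathbf{U}^n_{\mathbf{j}+\mathbf{e}_m}-\mathbf{U}^n_{\mathbf{j}-\mathbf{e}_m})$ (e.g. in 1D: $E^{n+1}_j=E^n_j+\frac{\lambda}{2}(H^n_{j+1}-H^n_{j-1})$, $H^{n+1}_j=H^n_j+\frac\lambda2(E^n_{j+1}-E^n_{j-1})$, $\lambda=\Delta t/\Delta x$). Given a linear scheme $\mathcal{L}$, its backward scheme $\mathcal{L}^*$ is $\mathcal{L}$ applied to the time-reversed system (for Maxwell, equivalently $\Delta t\to-\Delta t$ in the scheme), and the BFECC scheme based on $\mathcal{L}$ performs $\tilde{\mathbf{U}}^{n+1}=\mathcal{L}\mathbf{U}^n$, $\tilde{\mathbf{U}}^n=\mathcal{L}^*\tilde{\mathbf{U}}^{n+1}$, $\mathbf{U}^{n+1}=\mathcal{L}(\mathbf{U}^n+\tfrac12(\mathbf{U}^n-\tilde{\mathbf{U}}^n))$. Accuracy order is in the Fourier sense: with equal mesh sizes $h$ and $\Delta t/h$ fixed, a scheme with Fourier symbol matrix $Q(\mathbf{k})$ is $r$-th order accurate iff $Q(\mathbf{k})=e^{\Delta t P(i\mathbf{k})}+O(|\mathbf{k}h|^{r+1})$ as $h\to0$, where $P(i\mathbf{k})=2\pi i\sum_m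 k_mA_m$ is the symbol of the exact evolution. *)

(* Defs.v *)
From HB Require Import structures.
From mathcomp Require Import all_boot all_order all_algebra.
From mathcomp Require Import complex.
From mathcomp Require Import reals trigo.

Set Implicit Arguments.
Unset Strict Implicit.
Unset Printing Implicit Defensive.

Import Order.TTheory GRing.Theory Num.Theory.
Local Open Scope ring_scope.
Local Open Scope complex_scope.

Section Defs.
Variable R : realType.

Definition expi (t : R) : R[i] := cos t +i* sin t.

(* Fourier symbol of the central difference scheme for
   d_t u = sum_m A_m d_{x_m} u, for the Fourier mode e^{2 pi i k.x}:
   Q(k) = I + sum_m dt/(2 dx_m) (e^{2 pi i k_m dx_m} - e^{-2 pi i k_m dx_m}) A_m *)
Definition cd_symbol (d p : nat) (A : 'I_d -> 'M[R[i]]_p.+1)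
    (dt : R) (dx k : 'I_d -> R) : 'M[R[i]]_p.+1 :=
  1 + \sum_(m < d)
        (((dt / (2 * dx m))%:C) *
          (expi (2 * pi * k m * dx m) - expi (- (2 * pi * k m * dx m))))
          *: A m.

(* Backward scheme L^*: L applied to the time-reversed system
   d_t u = - sum_m A_m d_{x_m} u. *)
Definition cd_backward_symbol (d p : nat) (A : 'I_d -> 'M[R[i]]_p.+1)
    (dt : R) (dx k : 'I_d -> R) : 'M[R[i]]_p.+1 :=
  cd_symbol (fun m => - A m) dt dx k.

(* Symbol of the BFECC scheme based on a linear scheme with symbol L and
   backward symbol Ls:  U^{n+1} = L (U^n + 1/2 (U^n - Ls L U^n)). *)
Definition bfecc_symbol (p : nat) (L Ls : 'M[R[i]]_p.+1) : 'M[R[i]]_p.+1 :=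
  L *m (1 + 2^-1 *: (1 - Ls *m L)).

Definition bfecc_cd_symbol (d p : nat) (A : 'I_d -> 'M[R[i]]_p.+1)
    (dt : R) (dx k : 'I_d -> R) : 'M[R[i]]_p.+1 :=
  bfecc_symbol (cd_symbol A dt dx k) (cd_backward_symbol A dt dx k).

Definition exact_exponent (d p : nat) (A : 'I_d -> 'M[R[i]]_p.+1)
    (dt : R) (k : 'I_d -> R) : 'M[R[i]]_p.+1 :=
  (dt%:C * (2 * pi)%:C * 'i) *: \sum_(m < d) (k m)%:C *: A m.

Definition is_mxexp (p : nat) (X E : 'M[R[i]]_p.+1) : Prop :=
  forall (i j : 'I_p.+1) (eps : R), 0 < eps ->
  exists N : nat, forall n : nat, (N <= n)%N ->
    `| (\sum_(l < n) ((l`!%:R)^-1 *: X ^+ l)) i j - E i j | < eps%:C.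

Definition kvec_norm (d : nat) (k : 'I_d -> R) : R :=
  Num.sqrt (\sum_(m < d) k m ^+ 2).

(* r-th order accuracy in the Fourier sense: with equal mesh sizes h and
   dt/h = lam fixed, Q(k) = e^{dt P(ik)} + O(|k h|^{r+1}) as h -> 0. *)
Definition fourier_accurate (d p : nat) (A : 'I_d -> 'M[R[i]]_p.+1)
    (Q : R -> ('I_d -> R) -> ('I_d -> R) -> 'M[R[i]]_p.+1) (r : nat) : Prop :=
  forall lam : R, 0 < lam -> forall k : 'I_d -> R,
  exists C : R, exists delta : R, 0 < delta /\
  forall h : R, 0 < h -> h < delta ->
  forall E : 'M[R[i]]_p.+1, is_mxexp (exact_exponent A (lam * h) k) E ->
  forall i j : 'I_p.+1,
    `| (Q (lam * h) (fun _ => h) k - E) i j | <= (C * (h * kvec_norm k) ^+ r.+1)%:C.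

Definition l2norm (p : nat) (v : 'cV[R[i]]_p) : R :=
  Num.sqrt (\sum_(i < p) (complex.Re (v i 0) ^+ 2 + complex.Im (v i 0) ^+ 2)).

(* l^2 stability (von Neumann): the powers of the amplification matrix are
   uniformly bounded in the l^2 operator norm, over all wave numbers k and
   all time levels n. *)
Definition l2_stable (d p : nat) (G : ('I_d -> R) -> 'M[R[i]]_p.+1) : Prop :=
  exists K : R, forall (k : 'I_d -> R) (n : nat) (v : 'cV[R[i]]_p.+1),
    l2norm (G k ^+ n *m v) <= K * l2norm v.

Definition levi (a b c : nat) : R[i] :=
  if [&& a == 0, b == 1 & c == 2]%N || [&& a == 1, b == 2 & c == 0]%N
     || [&& a == 2, b == 0 & c == 1]%N then 1
  else if [&& a == 0, b == 2 & c == 1]%N || [&& a == 2, b == 1 & c == 0]%N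
     || [&& a == 1, b == 0 & c == 2]%N then -1
  else 0.

(* 1D: u = (E, H),  E_t = H_x,  H_t = E_x *)
Definition maxwell1 (m : 'I_1) : 'M[R[i]]_2 :=
  \matrix_(i < 2, j < 2) (if i != j then 1 else 0).

(* 2D TM_z: u = (H_x, H_y, E_z),
   (H_x)_t = - (E_z)_y, (H_y)_t = (E_z)_x, (E_z)_t = (H_y)_x - (H_x)_y *)
Definition maxwell2 (m : 'I_2) : 'M[R[i]]_3 :=
  \matrix_(i < 3, j < 3)
    (if (m == 0 :> nat) then
       (if ((i == 1 :> nat) && (j == 2 :> nat)) || ((i == 2 :> nat) && (j == 1 :> nat))
        then 1 else 0)
     else
       (if ((i == 0 :> nat) && (j == 2 :> nat)) || ((i == 2 :> nat) && (j == 0 :> nat))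
        then -1 else 0)).

(* 3D: u = (E_1, E_2, E_3, H_1, H_2, H_3), E_t = curl H, H_t = - curl E,
   with (curl F)_a = sum_{b,c} levi a b c d_b F_c. *)
Definition maxwell3 (m : 'I_3) : 'M[R[i]]_6 :=
  \matrix_(i < 6, j < 6)
    (if ((i < 3) && (3 <= j))%N then levi i m (j - 3)
     else if ((3 <= i) && (j < 3))%N then - levi (i - 3) m j
     else 0).

End Defs.

(* Main.v *)
Require Import Defs.
From HB Require Import structures.
From mathcomp Require Import all_boot all_order all_algebra.
From mathcomp Require Import complex.
From mathcomp Require Import reals trigo.
From mathcomp Require Import ring lra.
From mathcomp Require Import topology normedtype derive.
Import Order.TTheory GRing.Theory Num.Theory.
Import numFieldNormedType.Exports.
Local Open Scope ring_scope.
Local Open Scope complex_scope.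
Set Implicit Arguments. Unset Strict Implicit.
Import ComplexField.Normc.
Section S.
Variable R : realType.
Lemma expi_diff (a t : R) : a%:C * (expi t - expi (- t)) = 'i * (a * (2 * sin t))%:C.
Proof. rewrite /expi cosN sinN. simpc. apply/eqP; rewrite eq_complex /=. apply/andP; split; apply/eqP; ring. Qed.

Definition Bs d p (A : 'I_d -> 'M[R[i]]_p.+1) dt (dx k : 'I_d -> R) :=
  \sum_(m < d) (dt / (2 * dx m) * (2 * sin (2 * pi * k m * dx m)))%:C *: A m.

Lemma cd_symbolE d p A dt dx k : @cd_symbol R d p A dt dx k = 1 + 'i *: Bs A dt dx k.
Proof.
rewrite /cd_symbol /Bs scaler_sumr; congr (1 + _); apply: eq_bigr => m _.
by rewrite scalerA expi_diff.
Qed.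

Lemma bfeccE d p A dt dx k : @bfecc_cd_symbol R d p A dt dx k =
  (1 + 'i *: Bs A dt dx k) *m (1 - 2^-1 *: (Bs A dt dx k *m Bs A dt dx k)).
Proof.
rewrite /bfecc_cd_symbol /bfecc_symbol /cd_backward_symbol !cd_symbolE.
have -> : Bs (fun m => - A m) dt dx k = - Bs A dt dx k.
  by rewrite /Bs -sumrN; apply: eq_bigr => m _; rewrite scalerN.
congr (_ *m _); set B := Bs A dt dx k.
rewrite !mulmxE scalerN mulrDl mul1r mulrDr mulr1.
rewrite mulNr -scalerAl -scalerAr scalerA.
have -> : 'i * 'i = -1 :> R[i] by rewrite -expr2 sqr_i.
rewrite scaleN1r opprK.
set X := 'i *: B. set Y := B * B.
have -> : 1 - (1 + X + (- X + Y)) = - Y by rewrite addrA addrK opprD addrA subrr add0r.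
by rewrite scalerN.
Qed.
End S.
Section Sin.
Variable R : realType.

Lemma sin_lip (a b : R) : a <= b -> `|sin b - sin a| <= b - a.
Proof.
move=> ab.
have [] := @MVT_segment R sin cos a b ab (fun x _ => is_derive_sin x).
  exact/continuous_subspaceT/continuous_sin.
move=> c _ ->.
have hba : 0 <= b - a by rewrite subr_ge0.
rewrite normrM (ger0_norm hba).
by rewrite -[X in _ <= X]mul1r ler_wpM2r ?subr_ge0 ?cos_max.
Qed.

Lemma sin_le (x : R) : `|sin x| <= `|x|.
Proof.
have [x0|x0] := leP 0 x.
  by have := sin_lip x0; rewrite sin0 subr0 subr0 (ger0_norm x0).
by have := sin_lip (ltW x0); rewrite sin0 sub0r normrN add0r (ltr0_norm x0).
Qed.

Lemma cos_bd (x : R) : 0 <= 1 - cos x <= x ^+ 2 / 2.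
Proof.
have e : cos x = 1 - 2 * sin (x / 2) ^+ 2.
  have -> : x = (x / 2) *+ 2 by rewrite -mulr_natr divfK // pnatr_eq0.
  rewrite cos_mulr2n cos2sin2 mulr2n. rewrite [x / 2 *+ 2 / 2](_ : _ = x / 2); last first.
    by rewrite -mulr_natr mulfK // pnatr_eq0.
  ring.
have h := sin_le (x / 2).
have h2 : sin (x / 2) ^+ 2 <= (x / 2) ^+ 2.
  by rewrite -(real_normK (num_real (sin _))) -(real_normK (num_real (x / 2))) !expr2; apply: ler_pM.
rewrite e; apply/andP; split.
  have := sqr_ge0 (sin (x / 2)); lra.
have e4 : (x / 2) ^+ 2 = x ^+ 2 / 4 by field.
rewrite e4 in h2.
lra.
Qed.

Lemma aux3 (g c y : R) : 0 <= y -> c ^+ 2 <= y ^+ 2 -> 0 <= g -> g <= c ^+ 2 / 2 ->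
  g * y <= y ^+ 3 / 2.
Proof.
move=> hy hc hg h; apply: (le_trans (ler_wpM2r hy h)).
have -> : y ^+ 3 / 2 = y ^+ 2 / 2 * y by ring.
by rewrite ler_wpM2r // ler_wpM2r // invr_ge0.
Qed.

Lemma sin_cub (x : R) : `|sin x - x| <= `|x| ^+ 3 / 2.
Proof.
have dg : forall t : R, is_derive t (1 : R) (fun t : R => t - sin t) (1 - cos t).
  move=> t; exact: (is_deriveB (is_derive_id t 1) (is_derive_sin t)).
have cg : continuous (fun t : R => t - sin t).
  move=> t; apply: continuousB; [exact: id | exact: continuous_sin].
have [x0|x0] := leP 0 x.
  have [] := @MVT_segment R (fun t => t - sin t) (fun t => 1 - cos t) 0 x x0 (fun t _ => dg t).
    exact/continuous_subspaceT.
  move=> c; rewrite in_itv /= => /andP[c0 cx]; rewrite sin0 subr0 subr0 => e.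
  have := cos_bd c => /andP[h1 h2].
  rewrite subr0 in e; rewrite -normrN opprB e ger0_norm ?mulr_ge0 //.
  rewrite (ger0_norm x0).
  have hc : c ^+ 2 <= x ^+ 2 by rewrite !expr2; apply: ler_pM.
  exact: (aux3 x0 hc h1 h2).
have [] := @MVT_segment R (fun t => t - sin t) (fun t => 1 - cos t) x 0 (ltW x0) (fun t _ => dg t).
  exact/continuous_subspaceT.
move=> c; rewrite in_itv /= => /andP[xc c0]; rewrite sin0 subr0 sub0r => e.
have := cos_bd c => /andP[h1 h2].
have e2 : sin x - x = (1 - cos c) * (0 - x) by rewrite -e opprB.
rewrite e2 ger0_norm; last by rewrite mulr_ge0 // sub0r oppr_ge0 ltW.
rewrite (ltr0_norm x0) sub0r.
have hc : c ^+ 2 <= x ^+ 2.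
  rewrite -(sqrrN c) -(sqrrN x) !expr2; apply: ler_pM; rewrite ?oppr_ge0 ?lerN2 //.
have hx : 0 <= - x by rewrite oppr_ge0 ltW.
have -> : (- x) ^+ 3 = (- x) ^+ 3 by [].
by apply: (aux3 hx _ h1 h2); rewrite sqrrN.
Qed.
End Sin.
Section Norm.
Variable R : realType.

Lemma normCE (z : R[i]) : `|z| = (normc z)%:C.
Proof. by case: z => a b; rewrite normc_def. Qed.
Lemma normc_ge0 (z : R[i]) : 0 <= normc z.
Proof. by case: z => a b /=; exact: sqrtr_ge0. Qed.
Lemma normcD (x y : R[i]) : normc (x + y) <= normc x + normc y.
Proof. by rewrite -lecR rmorphD -!normCE ler_normD. Qed.
Lemma normcN (x : R[i]) : normc (- x) = normc x.
Proof. by apply: complexI; rewrite -!normCE normrN. Qed.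
Lemma normc_real (x : R) : normc (x%:C) = `|x|.
Proof. by rewrite /= expr0n addr0 sqrtr_sqr. Qed.
Lemma normc_sum I (r : seq I) (P : pred I) (F : I -> R[i]) :
  normc (\sum_(i <- r | P i) F i) <= \sum_(i <- r | P i) normc (F i).
Proof.
elim/big_rec2: _ => [|i y1 y2 _ h]; first by rewrite normc0.
by apply: le_trans (normcD _ _) _; rewrite lerD2l.
Qed.

Lemma le_sum1 n (F : 'I_n -> R) i : (forall j, 0 <= F j) -> F i <= \sum_j F j.
Proof. by move=> h; rewrite (bigD1 i) //= lerDl sumr_ge0. Qed.

Definition nm m n (M : 'M[R[i]]_(m, n)) : R := \sum_i \sum_j normc (M i j).

Lemma nm_ge0 m n (M : 'M[R[i]]_(m, n)) : 0 <= nm M.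
Proof. by apply: sumr_ge0 => i _; apply: sumr_ge0 => j _; exact: normc_ge0. Qed.
Lemma nm_entry m n (M : 'M[R[i]]_(m, n)) i j : normc (M i j) <= nm M.
Proof.
apply: (@le_trans _ _ (\sum_j normc (M i j))).
  by apply: (@le_sum1 _ (fun j => normc (M i j)) j) => j0; exact: normc_ge0.
apply: (@le_sum1 _ (fun i => \sum_j normc (M i j)) i) => i0.
by apply: sumr_ge0 => j' _; exact: normc_ge0.
Qed.
Lemma nmD m n (A B : 'M[R[i]]_(m, n)) : nm (A + B) <= nm A + nm B.
Proof.
rewrite /nm -big_split; apply: ler_sum => i _; rewrite -big_split; apply: ler_sum => j _.
by rewrite mxE normcD.
Qed.
Lemma nmN m n (A : 'M[R[i]]_(m, n)) : nm (- A) = nm A.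
Proof. by apply: eq_bigr => i _; apply: eq_bigr => j _; rewrite mxE normcN. Qed.
Lemma nmB m n (A B : 'M[R[i]]_(m, n)) : nm (A - B) <= nm A + nm B.
Proof. by apply: le_trans (nmD _ _) _; rewrite nmN. Qed.
Lemma nmZ m n c (A : 'M[R[i]]_(m, n)) : nm (c *: A) = normc c * nm A.
Proof.
rewrite /nm mulr_sumr; apply: eq_bigr => i _; rewrite mulr_sumr; apply: eq_bigr => j _.
by rewrite mxE normcM.
Qed.
Lemma nm0 m n : nm (0 : 'M[R[i]]_(m, n)) = 0.
Proof. by rewrite /nm big1 // => i _; rewrite big1 // => j _; rewrite mxE normc0. Qed.
Lemma nm_sum m n I (r : seq I) (P : pred I) (F : I -> 'M[R[i]]_(m, n)) :
  nm (\sum_(i <- r | P i) F i) <= \sum_(i <- r | P i) nm (F i).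
Proof.
elim/big_rec2: _ => [|i y1 y2 _ h]; first by rewrite nm0.
by apply: le_trans (nmD _ _) _; rewrite lerD2l.
Qed.
Lemma nmM m n p (A : 'M[R[i]]_(m, n)) (B : 'M[R[i]]_(n, p)) : nm (A *m B) <= nm A * nm B.
Proof.
rewrite /nm mulr_suml; apply: ler_sum => i _.
apply: (@le_trans _ _ (\sum_j \sum_k normc (A i k) * normc (B k j))).
  apply: ler_sum => j _; rewrite mxE; apply: le_trans (normc_sum _ _ _) _.
  by apply: ler_sum => k _; rewrite normcM.
rewrite exchange_big /= mulr_suml; apply: ler_sum => k _.
rewrite -mulr_sumr; apply: ler_wpM2l; first exact: normc_ge0.
apply: (@le_sum1 _ (fun k => \sum_j normc (B k j)) k) => k0.
by apply: sumr_ge0 => j _; exact: normc_ge0.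
Qed.
Lemma nmX p (M : 'M[R[i]]_p.+1) l : (0 < l)%N -> nm (M ^+ l) <= nm M ^+ l.
Proof.
case: l => // l _; elim: l => [|l IH]; first by rewrite !expr1.
rewrite exprS [X in _ <= X]exprS -mulmxE.
apply: le_trans (nmM _ _) _; apply: ler_wpM2l; [exact: nm_ge0 | exact: IH].
Qed.

Lemma geom_le2 (r : R) m : 0 <= r -> r <= 1/2 -> \sum_(0 <= l < m) r ^+ l <= 2 - 2 * r ^+ m.
Proof.
move=> r0 r12; elim: m => [|m IH]; first by rewrite big_geq // expr0; lra.
rewrite big_nat_recr //= exprS.
have := exprn_ge0 m r0; nra.
Qed.

Lemma tail_le2 (r : R) n : 0 <= r -> r <= 1/2 -> \sum_(3 <= l < n) r ^+ l <= 2 * r ^+ 3.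
Proof.
move=> r0 r12.
rewrite -{1}[3%N]add0n big_addn.
under eq_bigr do rewrite exprD.
rewrite -mulr_suml ler_wpM2r ?exprn_ge0 //.
apply: le_trans (geom_le2 _ r0 r12) _.
have := exprn_ge0 (n - 3) r0; lra.
Qed.

Lemma inv_fact_le1 l : normc ((l`!%:R : R[i])^-1) <= 1.
Proof.
rewrite -(rmorph_nat (real_complex R)) -fmorphV normc_real.
have h : (0 : R) < l`!%:R by rewrite ltr0n fact_gt0.
rewrite ger0_norm; last by rewrite invr_ge0 ltW.
by rewrite invf_le1 // ler1n fact_gt0.
Qed.

Lemma exp_tail p (X E : 'M[R[i]]_p.+1) r : is_mxexp X E -> nm X <= r -> 0 <= r -> r <= 1/2 ->
  forall i j, normc ((1 + X + 2^-1 *: (X *m X) - E) i j) <= 2 * r ^+ 3.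
Proof.
move=> hE hX r0 r12 i j.
pose S n := \sum_(l < n) ((l`!%:R)^-1 *: X ^+ l).
have S3 : S 3%N = 1 + X + 2^-1 *: (X *m X).
  rewrite /S !big_ord_recl big_ord0 /= addr0 addrA /bump /= expr0 expr1 expr2 -mulmxE.
  have f0 : (0`!%:R : R[i])^-1 = 1 by rewrite fact0 invr1.
  have f1 : (1`!%:R : R[i])^-1 = 1 by rewrite factS fact0 muln1 invr1.
  have f2 : (2`!%:R : R[i])^-1 = 2^-1 by rewrite !factS fact0.
  rewrite f0 !scale1r.
  have -> : (1 + (1 + 0))%N = 2%N by [].
  by rewrite f2.
have tail n : (3 <= n)%N -> nm (S n - S 3%N) <= 2 * r ^+ 3.
  move=> n3; rewrite /S -!(big_mkord xpredT (fun l => (l`!%:R)^-1 *: X ^+ l)).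
  rewrite (big_cat_nat (isT : (0 <= 3)%N) n3) /= addrC addrK.
  apply: le_trans (nm_sum _ _ _) _; apply: le_trans (tail_le2 n r0 r12).
  apply: ler_sum_nat => l /andP[l3 _]; rewrite nmZ.
  apply: le_trans (ler_wpM2r (nm_ge0 _) (inv_fact_le1 l)) _; rewrite mul1r.
  apply: le_trans (nmX _ _) _; first by apply: leq_trans l3.
  by apply: lerXn2r; rewrite ?nnegrE ?nm_ge0 //.
apply/ler_addgt0Pr => e e0.
have [N HN] := hE i j e e0.
have := HN (maxn N 3) (leq_maxl _ _); rewrite -S3 => hN.
have t := tail (maxn N 3) (leq_maxr _ _).
have : normc ((S 3%N - S (maxn N 3)) i j) <= 2 * r ^+ 3.
  by apply: le_trans (nm_entry _ _ _) _; rewrite -nmN opprB.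
move: hN; rewrite normCE ltcR => hN.
have -> : (S 3%N - E) i j = (S 3%N - S (maxn N 3)) i j + (S (maxn N 3) i j - E i j).
  by rewrite !mxE addrA subrK.
move=> h1; apply: le_trans (normcD _ _) _; lra.
Qed.
End Norm.

Section Zid.
Lemma subrACA' (V : zmodType) (x y z t : V) : (x - y) - (z - t) = (x - z) - (y - t).
Proof. by rewrite !opprD !opprK addrACA. Qed.
Lemma zid (V : zmodType) (x y z x' y' : V) :
  (x - y - z) - (x' - y') = (x - x') - (y - y') - z.
Proof. by rewrite addrAC subrACA'. Qed.
Lemma zid2 (V : zmodType) (a u v : V) : (a + u) - (a + v) = u - v.
Proof. by rewrite opprD addrACA subrr add0r. Qed.
End Zid.
Section Stab.
Variable R : realType.
Variable n : nat.
Implicit Types x y z : 'cV[R]_n.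

Definition dot x y := \sum_(i < n) x i 0 * y i 0.
Definition sq x := dot x x.

Lemma dotC x y : dot x y = dot y x.
Proof. by apply: eq_bigr => i _; rewrite mulrC. Qed.
Lemma dotDr x y z : dot x (y + z) = dot x y + dot x z.
Proof. by rewrite /dot -big_split; apply: eq_bigr => i _; rewrite mxE mulrDr. Qed.
Lemma dotDl x y z : dot (y + z) x = dot y x + dot z x.
Proof. by rewrite dotC dotDr !(dotC x). Qed.
Lemma dotZr x y c : dot x (c *: y) = c * dot x y.
Proof. by rewrite /dot mulr_sumr; apply: eq_bigr => i _; rewrite mxE mulrCA. Qed.
Lemma dotZl x y c : dot (c *: y) x = c * dot y x.
Proof. by rewrite dotC dotZr dotC. Qed.
Lemma dotNr x y : dot x (- y) = - dot x y.
Proof. by rewrite -scaleN1r dotZr mulN1r. Qed.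
Lemma dotNl x y : dot (- y) x = - dot y x.
Proof. by rewrite dotC dotNr dotC. Qed.
Lemma sq_ge0 x : 0 <= sq x.
Proof. by apply: sumr_ge0 => i _; rewrite -expr2 sqr_ge0. Qed.

Lemma dot_sym (B : 'M[R]_n) x y : B^T = B -> dot x (B *m y) = dot (B *m x) y.
Proof.
move=> sB; rewrite /dot.
under eq_bigr do rewrite mxE mulr_sumr.
under [RHS]eq_bigr do rewrite mxE mulr_suml.
rewrite exchange_big /=; apply: eq_bigr => i _; apply: eq_bigr => j _.
by rewrite -{1}sB mxE mulrCA mulrA.
Qed.

Lemma stab_real (B : 'M[R]_n) a : B^T = B ->
  (forall w, sq (B *m w) <= 3 * sq w) ->
  sq ((1%:M - 2^-1 *: (B *m B)) *m a) + sq (B *m ((1%:M - 2^-1 *: (B *m B)) *m a)) <= sq a.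
Proof.
move=> sB HB; set M := 1%:M - _.
set a1 := B *m a; set a2 := B *m a1; set a3 := B *m a2.
have EM : M *m a = a - 2^-1 *: a2 by rewrite /M mulmxBl mul1mx -scalemxAl -mulmxA.
have EBM : B *m (M *m a) = a1 - 2^-1 *: a3 by rewrite EM mulmxBr -scalemxAr.
have d1 : dot a a2 = sq a1 by rewrite /a2 dot_sym.
have d2 : dot a1 a3 = sq a2 by rewrite /a3 dot_sym.
rewrite EBM EM /sq !(dotDl, dotDr, dotNl, dotNr, dotZl, dotZr).
rewrite (dotC a2 a) (dotC a3 a1) d1 d2.
have := HB a2; rewrite -/a3 /sq => H.
have := sq_ge0 a2; rewrite /sq => H2.
lra.
Qed.

Lemma l2normE (v : 'cV[R[i]]_n) :
  l2norm v = Num.sqrt (sq (map_mx (@complex.Re R) v) + sq (map_mx (@complex.Im R) v)).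
Proof. by rewrite /l2norm /sq /dot -big_split; congr Num.sqrt; apply: eq_bigr => i _; rewrite !mxE !expr2. Qed.

Lemma ReIm_mul (X Y : 'M[R]_n) (v : 'cV[R[i]]_n) :
  let w := (map_mx (real_complex R) X + 'i *: map_mx (real_complex R) Y) *m v in
  map_mx (@complex.Re R) w = X *m map_mx (@complex.Re R) v - Y *m map_mx (@complex.Im R) v /\
  map_mx (@complex.Im R) w = X *m map_mx (@complex.Im R) v + Y *m map_mx (@complex.Re R) v.
Proof.
move=> w; split; apply/matrixP => i j; rewrite !mxE.
- rewrite raddf_sum -sumrB; apply: eq_bigr => l _; rewrite !mxE.
  by case: (v l j) => a b /=; ring.
- rewrite raddf_sum -big_split; apply: eq_bigr => l _; rewrite !mxE.
  by case: (v l j) => a b /=; ring.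
Qed.
End Stab.
Section Stab2.
Variable R : realType.
Variable p : nat.
Local Notation toC := (real_complex R).

Lemma G_decomp (B : 'M[R]_p.+1) :
  let Bc := map_mx toC B in
  (1 + 'i *: Bc) *m (1 - 2^-1 *: (Bc *m Bc)) =
  map_mx toC (1%:M - 2^-1 *: (B *m B)) + 'i *: map_mx toC (B *m (1%:M - 2^-1 *: (B *m B))).
Proof.
move=> Bc.
rewrite map_mxM map_mxB map_mxZ map_mx1 map_mxM -/Bc.
rewrite fmorphV rmorph_nat.
rewrite -[1%:M]/(1 : 'M[R[i]]_p.+1) !mulmxE mulrDl mul1r -scalerAl.
done.
Qed.

Lemma stab_step (B : 'M[R]_p.+1) (v : 'cV[R[i]]_p.+1) : B^T = B ->
  (forall w, sq (B *m w) <= 3 * sq w) ->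
  l2norm (((1 + 'i *: map_mx toC B) *m (1 - 2^-1 *: (map_mx toC B *m map_mx toC B))) *m v) <= l2norm v.
Proof.
move=> sB HB; rewrite G_decomp.
have [E1 E2] := ReIm_mul (1%:M - 2^-1 *: (B *m B)) (B *m (1%:M - 2^-1 *: (B *m B))) v.
rewrite !l2normE E1 E2 ler_sqrt; last by rewrite addr_ge0 ?sq_ge0.
set M := 1%:M - _.
set a := map_mx _ v; set b := map_mx _ v.
have Ha := stab_real a sB HB; have Hb := stab_real b sB HB.
rewrite -/M in Ha Hb.
rewrite -!mulmxA.
set a' := M *m a; set b' := M *m b.
have Hs : dot a' (B *m b') = dot b' (B *m a') by rewrite dot_sym // dotC.
rewrite /sq !(dotDl, dotDr, dotNl, dotNr) (dotC (B *m b') a') (dotC (B *m a') b') Hs.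
rewrite /sq in Ha Hb. lra.
Qed.
End Stab2.

Section Dims.
Variable R : realType.
Local Notation toC := (real_complex R).
Definition leviR (a b c : nat) : R :=
  if [&& a == 0, b == 1 & c == 2]%N || [&& a == 1, b == 2 & c == 0]%N
     || [&& a == 2, b == 0 & c == 1]%N then 1
  else if [&& a == 0, b == 2 & c == 1]%N || [&& a == 2, b == 1 & c == 0]%N
     || [&& a == 1, b == 0 & c == 2]%N then -1
  else 0.
Definition M3R (m : 'I_3) : 'M[R]_6 :=
  \matrix_(i < 6, j < 6)
    (if ((i < 3) && (3 <= j))%N then leviR i m (j - 3)
     else if ((3 <= i) && (j < 3))%N then - leviR (i - 3) m j
     else 0).
Lemma M3R_sym m : (M3R m)^T = M3R m.
Proof.
apply/matrixP => i j; rewrite !mxE.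
case: m => [[|[|[|m]]] Hm] //; case: i => [[|[|[|[|[|[|i]]]]]] Hi] //; case: j => [[|[|[|[|[|[|j]]]]]] Hj] //.
all: by rewrite /leviR /= ?oppr0 ?opprK.
Qed.
Lemma sq_mul_sum d n (c : 'I_d -> R) (M : 'I_d -> 'M[R]_n) (f : 'I_d -> 'I_n -> 'I_n -> R) w :
  (forall m i j, M m i j = f m i j) ->
  sq ((\sum_m c m *: M m) *m w) = \sum_i (\sum_j (\sum_m c m * f m i j) * w j 0) ^+ 2.
Proof.
move=> Hf; rewrite /sq /dot; apply: eq_bigr => i _; rewrite -expr2 mxE; congr (_ ^+ 2).
apply: eq_bigr => j _; rewrite summxE; congr (_ * _); apply: eq_bigr => m _.
by rewrite mxE Hf.
Qed.
Lemma sq_expand n (w : 'cV[R]_n) : sq w = \sum_i w i 0 ^+ 2.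
Proof. by apply: eq_bigr => i _; rewrite expr2. Qed.

Definition f3 (m : 'I_3) (i j : 'I_6) : R :=
    (if ((i < 3) && (3 <= j))%N then leviR i m (j - 3)
     else if ((3 <= i) && (j < 3))%N then - leviR (i - 3) m j
     else 0).

Lemma bound3 (c : 'I_3 -> R) (w : 'cV[R]_6) :
  sq ((\sum_m c m *: M3R m) *m w) <= (\sum_m c m ^+ 2) * sq w.
Proof.
rewrite (@sq_mul_sum _ _ _ _ f3); last by move=> m i j; rewrite mxE.
rewrite sq_expand.
rewrite !big_ord_recl !big_ord0.
rewrite /f3 /leviR /bump /=.
move: (c ord0) (c (lift ord0 ord0)) (c (lift ord0 (lift ord0 ord0))) => c0 c1 c2.
move: (w ord0 0) (w (lift ord0 ord0) 0) (w (lift ord0 (lift ord0 ord0)) 0) => w0 w1 w2.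
move: (w (lift ord0 (lift ord0 (lift ord0 ord0))) 0) (w (lift ord0 (lift ord0 (lift ord0 (lift ord0 ord0)))) 0) (w (lift ord0 (lift ord0 (lift ord0 (lift ord0 (lift ord0 ord0))))) 0) => w3 w4 w5.
rewrite !(mulr0, mul0r, addr0, add0r, oppr0, mulr1, mulrN1, opprK).
have := sqr_ge0 (c0*w0+c1*w1+c2*w2). have := sqr_ge0 (c0*w3+c1*w4+c2*w5).
lra.
Qed.

Definition f1 (m : 'I_1) (i j : 'I_2) : R := if i != j then 1 else 0.
Definition M1R (m : 'I_1) : 'M[R]_2 := \matrix_(i < 2, j < 2) f1 m i j.
Definition f2 (m : 'I_2) (i j : 'I_3) : R :=
    (if (m == 0 :> nat) then
       (if ((i == 1 :> nat) && (j == 2 :> nat)) || ((i == 2 :> nat) && (j == 1 :> nat))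
        then 1 else 0)
     else
       (if ((i == 0 :> nat) && (j == 2 :> nat)) || ((i == 2 :> nat) && (j == 0 :> nat))
        then -1 else 0)).
Definition M2R (m : 'I_2) : 'M[R]_3 := \matrix_(i < 3, j < 3) f2 m i j.

Lemma M1R_sym m : (M1R m)^T = M1R m.
Proof.
apply/matrixP => i j; rewrite !mxE /f1.
case: m => [[|m] Hm] //; case: i => [[|[|i]] Hi] //; case: j => [[|[|j]] Hj] //.
Qed.
Lemma M2R_sym m : (M2R m)^T = M2R m.
Proof.
apply/matrixP => i j; rewrite !mxE /f2.
case: m => [[|[|m]] Hm] //; case: i => [[|[|[|i]]] Hi] //; case: j => [[|[|[|j]]] Hj] //.
Qed.

Lemma bound1 (c : 'I_1 -> R) (w : 'cV[R]_2) :
  sq ((\sum_m c m *: M1R m) *m w) <= (\sum_m c m ^+ 2) * sq w.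
Proof.
rewrite (@sq_mul_sum _ _ _ _ f1); last by move=> m i j; rewrite mxE.
rewrite sq_expand.
rewrite !big_ord_recl !big_ord0.
rewrite /f1 /bump /=.
move: (c ord0) => c0.
move: (w ord0 0) (w (lift ord0 ord0) 0) => w0 w1.
rewrite !(mulr0, mul0r, addr0, add0r, oppr0, mulr1, mulrN1, opprK).
lra.
Qed.

Lemma bound2 (c : 'I_2 -> R) (w : 'cV[R]_3) :
  sq ((\sum_m c m *: M2R m) *m w) <= (\sum_m c m ^+ 2) * sq w.
Proof.
rewrite (@sq_mul_sum _ _ _ _ f2); last by move=> m i j; rewrite mxE.
rewrite sq_expand.
rewrite !big_ord_recl !big_ord0.
rewrite /f2 /bump /=.
move: (c ord0) (c (lift ord0 ord0)) => c0 c1.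
move: (w ord0 0) (w (lift ord0 ord0) 0) (w (lift ord0 (lift ord0 ord0)) 0) => w0 w1 w2.
rewrite !(mulr0, mul0r, addr0, add0r, oppr0, mulr1, mulrN1, opprK).
have := sqr_ge0 (c0*w0+c1*w1).
lra.
Qed.

Lemma maxwell1E m : maxwell1 R m = map_mx toC (M1R m).
Proof. apply/matrixP => i j; rewrite !mxE /f1; case: ifP => _; by rewrite ?rmorph1 ?rmorph0. Qed.
Lemma maxwell2E m : maxwell2 R m = map_mx toC (M2R m).
Proof.
apply/matrixP => i j; rewrite !mxE /f2.
case: ifP => _; case: ifP => _; by rewrite ?rmorphN ?rmorph1 ?rmorph0.
Qed.
Lemma leviE a b c : levi R a b c = toC (leviR a b c).
Proof.
rewrite /levi /leviR; case: ifP => _; first by rewrite rmorph1.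
case: ifP => _; by rewrite ?rmorphN ?rmorph1 ?rmorph0.
Qed.
Lemma maxwell3E m : maxwell3 R m = map_mx toC (M3R m).
Proof.
apply/matrixP => i j; rewrite !mxE.
case: ifP => _; first by rewrite leviE.
case: ifP => _; by rewrite ?rmorphN ?leviE ?rmorph0.
Qed.
End Dims.

Section StabGen.
Variable R : realType.
Local Notation toC := (real_complex R).

Lemma stable_gen d p (A : 'I_d -> 'M[R[i]]_p.+1) (MR : 'I_d -> 'M[R]_p.+1) dt dx :
  (forall m, A m = map_mx toC (MR m)) -> (forall m, (MR m)^T = MR m) ->
  (forall k w, sq ((\sum_m (dt / (2 * dx m) * (2 * sin (2 * pi * k m * dx m))) *: MR m) *m w)
     <= 3 * sq w) ->
  l2_stable (bfecc_cd_symbol A dt dx).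
Proof.
move=> HA Hs Hb; exists 1 => k n v; rewrite mul1r.
pose B := \sum_m (dt / (2 * dx m) * (2 * sin (2 * pi * k m * dx m))) *: MR m.
have EB : Bs A dt dx k = map_mx toC B.
  rewrite /B map_mx_sum /Bs; apply: eq_bigr => m _; by rewrite map_mxZ HA.
have sB : B^T = B.
  apply/matrixP => i j; rewrite /B mxE !summxE; apply: eq_bigr => m _.
  by rewrite !mxE -[in RHS](Hs m) mxE.
rewrite bfeccE EB.
elim: n v => [|n IH] v; first by rewrite expr0 mul1mx.
rewrite exprS -mulmxE -mulmxA.
exact: le_trans (stab_step _ sB (Hb k)) (IH _).
Qed.
End StabGen.

Section StabDims.
Variable R : realType.

Lemma csq (dt dxm t : R) : 0 < dxm ->
  (dt / (2 * dxm) * (2 * sin t)) ^+ 2 <= dt ^+ 2 * (1 / dxm) ^+ 2.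
Proof.
move=> hx.
have -> : dt / (2 * dxm) * (2 * sin t) = (dt * (1 / dxm)) * sin t.
  by field; rewrite gt_eqF.
have hs : sin t ^+ 2 <= 1.
  by have := cos2Dsin2 t; have := sqr_ge0 (cos t); lra.
rewrite [in X in X <= _]exprMn; apply: le_trans (ler_wpM2l _ hs) _; first exact: sqr_ge0.
by rewrite mulr1 exprMn.
Qed.

Lemma cfl (dt S : R) : 0 < dt -> 0 < S -> dt <= Num.sqrt 3 / Num.sqrt S -> dt ^+ 2 * S <= 3.
Proof.
move=> hdt hS H.
have q2 : (Num.sqrt 3 / Num.sqrt S) ^+ 2 * S = 3.
  by rewrite expr_div_n !sqr_sqrtr ?ler0n ?(ltW hS) // divfK // gt_eqF.
have : dt ^+ 2 <= (Num.sqrt 3 / Num.sqrt S) ^+ 2.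
  by rewrite !expr2; apply: ler_pM => //; exact: ltW.
move: (Num.sqrt 3 / Num.sqrt S) q2 => q q2 h.
rewrite -q2 ler_wpM2r // ltW //.
Qed.

Lemma stab1 (dt : R) (dx : 'I_1 -> R) : 0 < dt -> (forall m, 0 < dx m) ->
     dt <= Num.sqrt 3 * dx ord0 -> l2_stable (bfecc_cd_symbol (@maxwell1 R) dt dx).
Proof.
move=> hdt hdx H.
apply: (@stable_gen _ _ _ _ (@M1R R)); [exact: maxwell1E | exact: M1R_sym|].
move=> k w; apply: le_trans (bound1 _ w) _; rewrite ler_wpM2r ?sq_ge0 //.
rewrite big_ord1; apply: le_trans (csq _ _ (hdx _)) _.
have hx := hdx ord0.
have : dt <= Num.sqrt 3 / Num.sqrt ((1 / dx ord0) ^+ 2).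
  rewrite sqrtr_sqr ger0_norm; last by rewrite divr_ge0 // ltW.
  by rewrite invf_div divr1.
by move/(cfl hdt); apply; rewrite exprn_gt0 // divr_gt0.
Qed.

Lemma stab2 (dt : R) (dx : 'I_2 -> R) : 0 < dt -> (forall m, 0 < dx m) ->
     dt <= Num.sqrt 3 / Num.sqrt ((1 / dx 0) ^+ 2 + (1 / dx 1) ^+ 2) ->
     l2_stable (bfecc_cd_symbol (@maxwell2 R) dt dx).
Proof.
move=> hdt hdx H.
apply: (@stable_gen _ _ _ _ (@M2R R)); [exact: maxwell2E | exact: M2R_sym|].
move=> k w; apply: le_trans (bound2 _ w) _; rewrite ler_wpM2r ?sq_ge0 //.
apply: (@le_trans _ _ (\sum_m dt ^+ 2 * (1 / dx m) ^+ 2)).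
  by apply: ler_sum => m _; apply: csq.
have S0 : 0 < (1 / dx 0) ^+ 2 + (1 / dx 1) ^+ 2.
  by rewrite addr_gt0 // exprn_gt0 // divr_gt0.
have := cfl hdt S0 H.
rewrite -mulr_sumr !big_ord_recl big_ord0 addr0.
have -> : lift ord0 ord0 = 1 :> 'I_2 by apply/val_inj.
have -> : ord0 = 0 :> 'I_2 by apply/val_inj.
by [].
Qed.

Lemma stab3 (dt : R) (dx : 'I_3 -> R) : 0 < dt -> (forall m, 0 < dx m) ->
     dt <= Num.sqrt 3 / Num.sqrt ((1 / dx 0) ^+ 2 + (1 / dx 1) ^+ 2 + (1 / dx 2) ^+ 2) ->
     l2_stable (bfecc_cd_symbol (@maxwell3 R) dt dx).
Proof.
move=> hdt hdx H.
apply: (@stable_gen _ _ _ _ (@M3R R)); [exact: maxwell3E | exact: M3R_sym|].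
move=> k w; apply: le_trans (bound3 _ w) _; rewrite ler_wpM2r ?sq_ge0 //.
apply: (@le_trans _ _ (\sum_m dt ^+ 2 * (1 / dx m) ^+ 2)).
  by apply: ler_sum => m _; apply: csq.
have S0 : 0 < (1 / dx 0) ^+ 2 + (1 / dx 1) ^+ 2 + (1 / dx 2) ^+ 2.
  by rewrite !addr_gt0 // exprn_gt0 // divr_gt0.
have := cfl hdt S0 H.
rewrite -mulr_sumr !big_ord_recl big_ord0 addr0 addrA.
have -> : lift ord0 ord0 = 1 :> 'I_3 by apply/val_inj.
have -> : lift ord0 (lift ord0 ord0) = 2 :> 'I_3 by apply/val_inj.
have -> : ord0 = 0 :> 'I_3 by apply/val_inj.
by [].
Qed.
End StabDims.
Section Acc.
Variable R : realType.
Variables (d p : nat) (A : 'I_d -> 'M[R[i]]_p.+1).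
Local Notation toC := (real_complex R).

Lemma nm_combo (c : 'I_d -> R) M : (forall m, `|c m| <= M) ->
  nm (\sum_m (c m)%:C *: A m) <= M * \sum_m nm (A m).
Proof.
move=> hc; apply: le_trans (nm_sum _ _ _) _; rewrite mulr_sumr; apply: ler_sum => m _.
by rewrite nmZ normc_real ler_wpM2r ?nm_ge0.
Qed.

Lemma normc_i : normc ('i : R[i]) = 1.
Proof. by rewrite /= expr0n add0r expr1n sqrtr1. Qed.
Lemma normc_half : normc (2^-1 : R[i]) = 2^-1.
Proof.
rewrite -(rmorph_nat toC) -fmorphV normc_real ger0_norm //; lra.
Qed.

Lemma Qexp (B : 'M[R[i]]_p.+1) : (1 + 'i *: B) *m (1 - 2^-1 *: (B *m B)) =
  1 + (('i *: B - 2^-1 *: (B *m B)) - ('i * 2^-1) *: (B *m (B *m B))).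
Proof.
rewrite !mulmxE mulrDl mul1r mulrBr mulr1 -scalerAl -scalerAr scalerA.
by rewrite -!addrA; congr (_ + _); rewrite addrCA.
Qed.

Lemma Texp (B : 'M[R[i]]_p.+1) :
  1 + 'i *: B + 2^-1 *: (('i *: B) *m ('i *: B)) = 1 + ('i *: B - 2^-1 *: (B *m B)).
Proof.
rewrite !mulmxE -scalerAl -scalerAr !scalerA.
have -> : 2^-1 * 'i * 'i = - 2^-1 :> R[i] by rewrite -mulrA -expr2 sqr_i mulrN1.
by rewrite scaleNr addrA.
Qed.

Lemma acc_gen : fourier_accurate A (@bfecc_cd_symbol R d p A) 2.
Proof.
move=> lam lam0 k.
have lam0' : 0 <= lam := ltW lam0.
set kap := kvec_norm k.
have kap0 : 0 <= kap by exact: sqrtr_ge0.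
have hk m : `|k m| <= kap.
  rewrite -sqrtr_sqr /kap /kvec_norm ler_sqrt; last by apply: sumr_ge0 => *; exact: sqr_ge0.
  by apply: (@le_sum1 _ _ (fun m => k m ^+ 2)) => j; exact: sqr_ge0.
set SA := \sum_m nm (A m).
have SA0 : 0 <= SA by apply: sumr_ge0 => *; exact: nm_ge0.
have pi0 : 0 < pi :> R by exact: pi_gt0.
set a := lam * (2 * pi) * SA.
set b := lam * (2 * pi) ^+ 3 * SA.
have a0 : 0 <= a by rewrite /a !mulr_ge0 // ?ltW //.
have b0 : 0 <= b.
  rewrite /b; apply: mulr_ge0 => //; apply: mulr_ge0; first exact: ltW.
  by apply: exprn_ge0; apply: mulr_ge0 => //; exact: ltW.
exists (b + a * b + a ^+ 3 / 2 + 2 * a ^+ 3).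
exists (1 / ((1 + 2 * a) * (1 + kap))).
have P1 : 0 < 1 + 2 * a by lra.
have P2 : 0 < 1 + kap by lra.
split; first by rewrite divr_gt0 // mulr_gt0.
move=> h h0 hd E hE i j.
set u := h * kap.
have u0 : 0 <= u by rewrite mulr_ge0 // ltW.
have hu : u + 2 * a * u <= 1.
  have P : 0 < (1 + 2 * a) * (1 + kap) by rewrite mulr_gt0.
  move: hd; rewrite ltr_pdivlMr // => hd.
  have := mulr_ge0 (ltW h0) (ltW P1).
  rewrite /u; nra.
have u1 : u <= 1 by nra.
have au : a * u <= 1 / 2 by nra.
have hth m : `|2 * pi * k m * h| <= 2 * pi * u.
  rewrite !normrM (ger0_norm (ltW h0)) (ger0_norm (ltW pi0)) normr_nat /u.
  have e1 : h * `|k m| <= h * kap := ler_wpM2l (ltW h0) (hk m).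
  have p2 : 0 <= 2 * pi :> R by rewrite mulr_ge0 // ltW.
  have e2 := ler_wpM2l p2 e1.
  lra.
pose th m := 2 * pi * k m * h.
have EBs : Bs A (lam * h) (fun _ => h) k = \sum_m (lam * sin (th m))%:C *: A m.
  rewrite /Bs; apply: eq_bigr => m _; congr (_%:C *: _); rewrite /th /=.
  by field; rewrite gt_eqF.
have EX : exact_exponent A (lam * h) k = 'i *: \sum_m (lam * th m)%:C *: A m.
  rewrite /exact_exponent !scaler_sumr; apply: eq_bigr => m _; rewrite !scalerA; congr (_ *: _).
  by rewrite /th !rmorphM; ring.
set Bsv := \sum_m (lam * sin (th m))%:C *: A m.
set Btv := \sum_m (lam * th m)%:C *: A m.
have nBs : nm Bsv <= a * u.
  have -> : a * u = lam * (2 * pi * u) * SA by rewrite /a; ring.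
  apply: nm_combo => m; rewrite normrM (gtr0_norm lam0) ler_wpM2l //.
  apply: (le_trans (sin_le (th m))). exact: hth.
have nBt : nm Btv <= a * u.
  have -> : a * u = lam * (2 * pi * u) * SA by rewrite /a; ring.
  apply: nm_combo => m; rewrite normrM (gtr0_norm lam0) ler_wpM2l //.
  exact: hth m.
have ED : Bsv - Btv = \sum_m (lam * (sin (th m) - th m))%:C *: A m.
  rewrite /Bsv /Btv -sumrB; apply: eq_bigr => m _.
  by rewrite -scalerBl -rmorphB mulrBr.
have nD : nm (Bsv - Btv) <= b * u ^+ 3.
  rewrite ED; have -> : b * u ^+ 3 = lam * (2 * pi * u) ^+ 3 * SA by rewrite /b; ring.
  apply: nm_combo => m; rewrite normrM (gtr0_norm lam0) ler_wpM2l //.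
  apply: le_trans (sin_cub _) _.
  have t3 : `|th m| ^+ 3 <= (2 * pi * u) ^+ 3.
    by apply: lerXn2r; rewrite ?nnegrE ?hth //; apply: le_trans (hth m).
  have := exprn_ge0 3 (normr_ge0 (th m)); lra.
rewrite EX in hE.
have nX : nm ('i *: Btv) <= a * u by rewrite nmZ normc_i mul1r.
have Et := exp_tail hE nX (mulr_ge0 a0 u0) au i j.
rewrite bfeccE EBs -/Bsv normCE lecR.
set Q := (1 + 'i *: Bsv) *m (1 - 2^-1 *: (Bsv *m Bsv)).
set T := 1 + 'i *: Btv + 2^-1 *: (('i *: Btv) *m ('i *: Btv)).
have -> : Q - E = (Q - T) + (T - E) by rewrite addrA subrK.
rewrite mxE; apply: le_trans (normcD _ _) _.
apply: le_trans (lerD (nm_entry _ i j) Et) _.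
rewrite /Q /T Qexp Texp zid2 zid.
set D := Bsv - Btv.
have e1 : 'i *: Bsv - 'i *: Btv = 'i *: D by rewrite scalerBr.
have e2 : 2^-1 *: (Bsv *m Bsv) - 2^-1 *: (Btv *m Btv) = 2^-1 *: (Bsv *m D + D *m Btv).
  by rewrite -scalerBr /D mulmxBr mulmxBl addrA subrK.
rewrite e1 e2.
have n1 : nm ('i *: D) <= b * u ^+ 3 by rewrite nmZ normc_i mul1r.
have hxz : nm Bsv * nm D <= a * b * u ^+ 3.
  apply: le_trans (ler_pM (nm_ge0 _) (nm_ge0 _) nBs nD) _.
  have -> : a * u * (b * u ^+ 3) = (a * b * u ^+ 3) * u by ring.
  by apply: ler_piMr => //; apply: mulr_ge0; [exact: mulr_ge0 | exact: exprn_ge0].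
have hzy : nm D * nm Btv <= a * b * u ^+ 3.
  apply: le_trans (ler_pM (nm_ge0 _) (nm_ge0 _) nD nBt) _.
  have -> : b * u ^+ 3 * (a * u) = (a * b * u ^+ 3) * u by ring.
  by apply: ler_piMr => //; apply: mulr_ge0; [exact: mulr_ge0 | exact: exprn_ge0].
have n2 : nm (2^-1 *: (Bsv *m D + D *m Btv)) <= 2^-1 * (2 * (a * b * u ^+ 3)).
  rewrite nmZ normc_half ler_wpM2l ?invr_ge0 ?ler0n //.
  apply: le_trans (nmD _ _) _; apply: le_trans (lerD (nmM _ _) (nmM _ _)) _.
  lra.
have hx2 : nm Bsv * nm Bsv <= (a * u) * (a * u) := ler_pM (nm_ge0 _) (nm_ge0 _) nBs nBs.
have hx3 : nm Bsv * (nm Bsv * nm Bsv) <= (a * u) * ((a * u) * (a * u)) :=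
  ler_pM (nm_ge0 Bsv) (mulr_ge0 (nm_ge0 _) (nm_ge0 _)) nBs hx2.
have n3 : nm (('i * 2^-1) *: (Bsv *m (Bsv *m Bsv))) <= 2^-1 * ((a * u) * ((a * u) * (a * u))).
  rewrite nmZ normcM normc_i normc_half mul1r ler_wpM2l ?invr_ge0 ?ler0n //.
  apply: le_trans (nmM _ _) _; apply: le_trans hx3.
  by rewrite ler_wpM2l ?nm_ge0 // nmM.
apply: le_trans (lerD (le_trans (nmB _ _) (le_trans (lerD (le_trans (nmB _ _) (lerD n1 n2)) n3) (lexx _))) (lexx _)) _.
have -> : (a * u) ^+ 3 = a ^+ 3 * u ^+ 3 by rewrite exprMn.
have -> : (a * u) * ((a * u) * (a * u)) = a ^+ 3 * u ^+ 3 by ring.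
lra.
Qed.
End Acc.

Local Close Scope complex_scope.
Unset Implicit Arguments.

Theorem theorem3p1 (R : realType) :
  (* (1) one-dimensional case *)
  (fourier_accurate (@maxwell1 R) (@bfecc_cd_symbol R 1 1 (@maxwell1 R)) 2 /\
   forall (dt : R) (dx : 'I_1 -> R), 0 < dt -> (forall m, 0 < dx m) ->
     dt <= Num.sqrt 3 * dx ord0 ->
     l2_stable (bfecc_cd_symbol (@maxwell1 R) dt dx)) /\
  (* (2) two-dimensional TM_z case *)
  (fourier_accurate (@maxwell2 R) (@bfecc_cd_symbol R 2 2 (@maxwell2 R)) 2 /\
   forall (dt : R) (dx : 'I_2 -> R), 0 < dt -> (forall m, 0 < dx m) ->
     dt <= Num.sqrt 3 / Num.sqrt ((1 / dx 0) ^+ 2 + (1 / dx 1) ^+ 2) ->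
     l2_stable (bfecc_cd_symbol (@maxwell2 R) dt dx)) /\
  (* (3) three-dimensional case *)
  (fourier_accurate (@maxwell3 R) (@bfecc_cd_symbol R 3 5 (@maxwell3 R)) 2 /\
   forall (dt : R) (dx : 'I_3 -> R), 0 < dt -> (forall m, 0 < dx m) ->
     dt <= Num.sqrt 3 / Num.sqrt ((1 / dx 0) ^+ 2 + (1 / dx 1) ^+ 2 + (1 / dx 2) ^+ 2) ->
     l2_stable (bfecc_cd_symbol (@maxwell3 R) dt dx)).
Proof.
split; first by split; [exact: acc_gen | exact: stab1].
split; first by split; [exact: acc_gen | exact: stab2].
by split; [exact: acc_gen | exact: stab3].
Qed.
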